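(* In a $2^K$ factorial experiment, for nonempty $\mathcal F_+\subseteq\mathcal P_K$ and any $\mathcal F_+'\subseteq\mathcal P_K'$, the OLS outputs of the regression $Y_i\sim1+\sum_{\mathcal K\in\mathcal F_+}Z_{i,\mathcal K}+\sum_{\mathcal K\in\mathcal F_+'}Z_{i,\mathcal K}x_i$ satisfy $\tilde\tau_{r,+}=C_{S,+}\hat Y_{r,S}$ and $\tilde\Omega_{r,+}=C_{S,+}\hat\Psi_{r,S}C_{S,+}^T$.
   Context: $2^K$ factorial experiment: $Q=2^K$ treatment levels $(z_1,\dots,z_K)\in\{-1,+1\}^K$ identified with $1,\dots,Q$ lexicographically ($-1$ before $+1$). $N$ units with outcomes $Y_i$, covariates $x_i\in\mathbb R^J$ ($\sum_ix_i=0$), treatment indicator vector $t_i\in\{0,1\}^Q$, and factor levels $Z_{ik}\in\{-1,+1\}$. $\mathcal P_K$: nonempty subsets of $\{1,\dots,K\}$; $\mathcal P_K'=\{\emptyset\}\cup\mathcal P_K$; $Z_{i,\mathcal K}=\prod_{k\in\mathcal K}Z_{ik}$ with $Z_{i,\emptyset}=1$ (so $Z_{i,\emptyset}x_i=x_i$). $c_{\mathcal K}\in\mathbb R^Q$ has entry $2^{-(K-1)}\prod_{k\in\mathcal K}z_k$ at level $(z_1,\dots,z_K)$ (so $c_\emptyset=2^{-(K-1)}1_Q$). $C_{S,+}$ has rows $c_{\mathcal K}^T$, $\mathcal K\in\mathcal F_+$; $C_{S,-}$ has rows $c_{\mathcal K}^T$, $\mathcal K\in\mathcal P_K\setminus\mathcal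 F_+$ (the zero row $0^T$ if empty); $C'_{S,-}$ has rows $c_{\mathcal K}^T$, $\mathcal K\in\mathcal P_K'\setminus\mathcal F_+'$ (zero row if empty). OLS outputs: $\tilde\tau_{r,+}$ is the vector of 2 times the OLS coefficients of $Z_{i,\mathcal K}$, $\mathcal K\in\mathcal F_+$ (ordered as rows of $C_{S,+}$), and $\tilde\Omega_{r,+}$ its Eicker–Huber–White covariance estimator (4 times the corresponding block of $(X^TX)^{-1}X^T\mathrm{diag}(\hat\epsilon_i^2)X(X^TX)^{-1}$, $X$ design matrix, $\hat\epsilon_i$ residuals). Restricted least squares: $\chi_{L,i}=(t_i^T,(t_i\otimes x_i)^T)^T$, $\chi_L$ the matrix with rows $\chi_{L,i}^T$ ($\chi_L^T\chi_L$ nonsingular), $\theta=(\theta_Y^T,\theta_\gamma^T)^T$, $\theta_Y\in\mathbb R^Q$, $\theta_\gamma\in\mathbb R^{JQ}$. With restriction $R\theta=0$ given by $C_{S,-}\theta_Y=0$ and $(C'_{S,-}\otimes I_J)\theta_\gamma=0$ (dropping vacuous zero rows), $\hat\theta_r=\arg\min_\theta\sum_i(Y_i-\chi_{L,i}^T\theta)^2$ s.t. $R\theta=0$, and $\hat Y_{r,S}$ is its $\theta_Y$-part. With RLS residuals $\hat\epsilon_{r,i}$, $M_r=(\chi_L^T\chi_L)^{-1}R^T\{R(\chi_L^T\chi_L)^{-1}R^T\}^{-1}$ and $\hat\Sigma_r=(\chi_L^T\chi_L)^{-1}\chi_L^T\mathrm{diag}(\hat\epsilon_{r,i}^2)\chi_L(\chi_L^T\chi_L)^{-1}$,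 $\hat\Psi_{r,S}$ is the upper-left $Q\times Q$ block of $(I-M_rR)\hat\Sigma_r(I-M_rR)^T$. *)

(* Defs.v *)
From HB Require Import structures.
From mathcomp Require Import all_boot all_order all_algebra.
Set Implicit Arguments. Unset Strict Implicit. Unset Printing Implicit Defensive.
Import Order.TTheory GRing.Theory Num.Theory.
Local Open Scope ring_scope.

(* Treatment levels are 'I_(2^K); level q (as a nat,
   0 <= q < 2^K) corresponds to (z_1,...,z_K) with z_{k+1} = +1 iff bit
   (K-1-k) of q is set (lexicographic order, -1 before +1, factor 1 most
   significant).  Factors are indexed by k : 'I_K (factor k+1 of the paper). *)

Section Factorial.
Variable R : realFieldType.

Definition zlev (K : nat) (q : nat) (k : 'I_K) : R :=
  if odd (q %/ 2 ^ (K.-1 - k)) then 1 else -1.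

Definition cK (K : nat) (S : {set 'I_K}) (q : nat) : R :=
  2 / 2 ^+ K * \prod_(k in S) zlev q k.

Definition nthS (K : nat) (F : {set {set 'I_K}}) (a : nat) : {set 'I_K} :=
  nth set0 (enum F) a.

Variables (N J K : nat).
Variables (W : 'I_N -> 'I_(2 ^ K)) (x : 'M[R]_(N, J)) (Y : 'cV[R]_N).
Variables (Fp Fp' : {set {set 'I_K}}).

Definition tind (i : 'I_N) (q : nat) : R := ((W i : nat) == q)%:R.

Definition ZS (i : 'I_N) (S : {set 'I_K}) : R := \prod_(k in S) zlev (W i) k.

(* x_{ij} with j given as a nat (0 outside range; only used for j < J) *)
Definition xn (i : 'I_N) (j : nat) : R :=
  if insub j is Some j' then x i j' else 0.

Definition ncol := ((1 + #|Fp|) + #|Fp'| * J)%N.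

Definition Xdes : 'M[R]_(N, ncol) :=
  \matrix_(i, c)
    match split c with
    | inl a => match split a with
               | inl _ => 1
               | inr b => ZS i (nthS Fp b)
               end
    | inr b => ZS i (nthS Fp' (b %/ J)) * xn i (b %% J)
    end.

Definition beta_ols : 'cV[R]_ncol := invmx (Xdes^T *m Xdes) *m Xdes^T *m Y.
Definition res_ols : 'cV[R]_N := Y - Xdes *m beta_ols.

Definition V_ehw : 'M[R]_ncol :=
  invmx (Xdes^T *m Xdes) *m Xdes^T *m diag_mx (\row_i (res_ols i 0) ^+ 2)
    *m Xdes *m invmx (Xdes^T *m Xdes).

Definition posZ (a : 'I_#|Fp|) : 'I_ncol := lshift _ (rshift 1 a).

Definition tau_r_plus : 'cV[R]_#|Fp| := \col_a (2 * beta_ols (posZ a) 0).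
Definition Omega_r_plus : 'M[R]_#|Fp| := \matrix_(a, b) (4 * V_ehw (posZ a) (posZ b)).

Definition CSplus : 'M[R]_(#|Fp|, 2 ^ K) := \matrix_(a, q) cK (nthS Fp a) q.

Definition Qd := (2 ^ K)%N.
Definition ntheta := (Qd + Qd * J)%N.

(* chi_{L,i} = (t_i, t_i (x) x_i); Kronecker index (q, j) |-> q * J + j *)
Definition chiL : 'M[R]_(N, ntheta) :=
  \matrix_(i, c)
    match split c with
    | inl q => tind i q
    | inr k => tind i (k %/ J) * xn i (k %% J)
    end.

Definition Fm : {set {set 'I_K}} := [set S | (S != set0) && (S \notin Fp)].
Definition Fm' : {set {set 'I_K}} := [set S | S \notin Fp'].

(* R theta = 0  <=>  C_{S,-} theta_Y = 0  and  (C'_{S,-} (x) I_J) theta_gamma = 0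
   (vacuous zero rows dropped: empty index sets give no rows) *)
Definition Rres : 'M[R]_(#|Fm| + #|Fm'| * J, ntheta) :=
  \matrix_(r, c)
    match split r, split c with
    | inl a, inl q => cK (nthS Fm a) q
    | inr b, inr k => if (b %% J == k %% J)%N then cK (nthS Fm' (b %/ J)) (k %/ J)
                      else 0
    | _, _ => 0
    end.

Definition RSS (th : 'cV[R]_ntheta) : R :=
  \sum_i ((Y - chiL *m th) i 0) ^+ 2.

Definition is_RLS (th : 'cV[R]_ntheta) : Prop :=
  Rres *m th = 0 /\ forall th', Rres *m th' = 0 -> RSS th <= RSS th'.

Definition Gram : 'M[R]_ntheta := chiL^T *m chiL.

Definition Mr : 'M[R]_(ntheta, #|Fm| + #|Fm'| * J) :=
  invmx Gram *m Rres^T *m invmx (Rres *m invmx Gram *m Rres^T).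

Definition Sigma_r (th : 'cV[R]_ntheta) : 'M[R]_ntheta :=
  invmx Gram *m chiL^T *m diag_mx (\row_i ((Y - chiL *m th) i 0) ^+ 2)
    *m chiL *m invmx Gram.

Definition Yhat_rS (th : 'cV[R]_ntheta) : 'cV[R]_Qd := usubmx th.

Definition Psi_rS (th : 'cV[R]_ntheta) : 'M[R]_Qd :=
  ulsubmx ((1%:M - Mr *m Rres) *m Sigma_r th *m (1%:M - Mr *m Rres)^T).

End Factorial.

(* Main.v *)
Require Import Defs.
From HB Require Import structures.
From mathcomp Require Import all_boot all_order all_algebra.
From mathcomp Require Import zify ring lra.
Import Order.TTheory GRing.Theory Num.Theory.
Local Open Scope ring_scope.

Set Implicit Arguments. Unset Strict Implicit. Unset Printing Implicit Defensive.

Lemma splitL m n (i : 'I_m) : split (lshift n i) = inl i.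
Proof. exact: (unsplitK (inl i)). Qed.
Lemma splitR m n (j : 'I_n) : split (rshift m j) = inr j.
Proof. exact: (unsplitK (inr j)). Qed.

Lemma bits_eq (K q q' : nat) : (q < 2 ^ K)%N -> (q' < 2 ^ K)%N ->
  (forall i, (i < K)%N -> odd (q %/ 2 ^ i) = odd (q' %/ 2 ^ i)) -> q = q'.
Proof.
elim: K q q' => [|K IH] q q' hq hq' H.
  by move: hq hq'; rewrite expn0 !ltnS !leqn0 => /eqP-> /eqP->.
have h0 := H 0%N isT; rewrite !expn0 !divn1 in h0.
have e : (q %/ 2 = q' %/ 2)%N.
  apply: IH.
  - by rewrite ltn_divLR // -expnSr.
  - by rewrite ltn_divLR // -expnSr.
  move=> i hi; rewrite -!divnMA -expnS; exact: H.
by rewrite (divn_eq q 2) (divn_eq q' 2) e !modn2 h0.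
Qed.

Section Walsh.
Variables (R : realFieldType) (K : nat).

Definition w (S : {set 'I_K}) (q : nat) : R := \prod_(k in S) zlev R q k.

Definition bits (q : nat) : {set 'I_K} := [set k : 'I_K | odd (q %/ 2 ^ (K.-1 - k))].

Lemma zlevE q k : zlev R q k = if k \in bits q then 1 else -1.
Proof. by rewrite /zlev inE. Qed.

Lemma bits_inj : injective (fun q : 'I_(2 ^ K) => bits q).
Proof.
move=> q q' /setP e; apply/val_inj/(@bits_eq K); [exact: ltn_ord|exact: ltn_ord|move=> i hi].
have hk : (K.-1 - i < K)%N by lia.
have := e (Ordinal hk); rewrite !inE /=.
by have -> : (K.-1 - (K.-1 - i) = i)%N by lia.
Qed.

Lemma card_sets : #|{set 'I_K}| = (2 ^ K)%N.
Proof. by rewrite -cardsT -powersetT card_powerset cardsT card_ord. Qed.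

Lemma bits_onto : [set bits q | q : 'I_(2 ^ K)] = setT.
Proof.
apply/eqP; rewrite eqEcard subsetT /= cardsT card_sets card_imset ?card_ord //.
exact: bits_inj.
Qed.

Lemma sum_bits (F : {set 'I_K} -> R) :
  \sum_(q < 2 ^ K) F (bits q) = \sum_A F A.
Proof.
rewrite -(big_imset _ (in2W bits_inj)) /= bits_onto.
by apply: eq_bigl => A; rewrite inE.
Qed.

Definition tog (k0 : 'I_K) (A : {set 'I_K}) := [set k | (k \in A) != (k == k0)].
Lemma togK k0 : involutive (tog k0).
Proof. by move=> A; apply/setP=> k; rewrite !inE; case: (k \in A); case: (k == k0). Qed.

Definition sg (b : bool) : R := if b then 1 else -1.

Lemma sigma0 (T : {set 'I_K}) : T != set0 ->
  \sum_(A : {set 'I_K}) \prod_(k in T) sg (k \in A) = 0.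
Proof.
case/set0Pn=> k0 hk0.
set s := (X in X = 0).
have : s = - s.
  rewrite {1}/s (reindex_inj (can_inj (togK k0))) /s -sumrN.
  apply: eq_bigr => A _.
  rewrite (bigD1 k0) //= [in RHS](bigD1 k0) //= -mulNr; congr (_ * _).
    rewrite /tog inE eqxx; case: (k0 \in A); by rewrite /sg /= ?opprK.
  apply: eq_bigr => k /andP [_ hk]; by rewrite /tog inE (negbTE hk); case: (k \in A).
move=> h; lra.
Qed.

Lemma wE S q : w S q = \prod_(k in S) sg (k \in bits q).
Proof. by apply: eq_bigr => k _; rewrite zlevE. Qed.

Lemma w_mul S S' q : w S q * w S' q = w [set k | (k \in S) != (k \in S')] q.
Proof.
rewrite /w !(big_mkcond (fun k => k \in _)) -big_split /=.
apply: eq_bigr => k _; rewrite inE.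
have z2 : zlev R q k * zlev R q k = 1 by rewrite /zlev; case: ifP => _; rewrite ?mulN1r ?opprK ?mulr1.
by case: (k \in S); case: (k \in S'); rewrite /= ?mulr1 ?mul1r ?z2.
Qed.

Lemma w_orth S S' :
  \sum_(q < 2 ^ K) w S q * w S' q = if S == S' then (2 ^ K)%:R else 0.
Proof.
under eq_bigr do rewrite w_mul wE.
rewrite (sum_bits (fun A => \prod_(k in [set k | (k \in S) != (k \in S')]) sg (k \in A))).
case: eqP => [<-|ne].
  have -> : [set k | (k \in S) != (k \in S)] = set0 by apply/setP=> k; rewrite !inE eqxx.
  under eq_bigr do rewrite big_set0.
  by rewrite sumr_const card_sets.
apply: sigma0; apply/set0Pn.
have [k hk] : exists k, (k \in S) != (k \in S').
  case: (pickP (fun k => (k \in S) != (k \in S'))) => [k hk|h]; first by exists k.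
  by case: ne; apply/setP => k; have := h k => /negbFE/eqP.
by exists k; rewrite inE.
Qed.

Lemma w0 q : w set0 q = 1.
Proof. by rewrite /w big_set0. Qed.

End Walsh.


Section Gram.
Variables (R : realFieldType) (K J : nat).

Lemma sum_mulJ (F : nat -> R) Q :
  \sum_(k < Q * J) F k = \sum_(q < Q) \sum_(j < J) F (q * J + j)%N.
Proof.
elim: Q => [|Q IH]; first by rewrite mul0n !big_ord0.
rewrite mulSnr big_split_ord /= IH big_ord_recr /=; congr (_ + _).
Qed.

Lemma J_pos m (b : 'I_(m * J)) : (0 < J)%N.
Proof. case: b; case: J => [|J'] //; by rewrite muln0. Qed.

Definition Wm m1 m2 (s1 : 'I_m1 -> {set 'I_K}) (s2 : nat -> {set 'I_K}) :
  'M[R]_(m1 + m2 * J, 2 ^ K + 2 ^ K * J) :=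
  \matrix_(r, c) match split r, split c with
  | inl a, inl q => w R (s1 a) q
  | inr b, inr k => if (b %% J == k %% J)%N then w R (s2 (b %/ J)%N) (k %/ J)%N else 0
  | _, _ => 0
  end.

Lemma sum_ind_J (j0 : nat) (c : R) : (j0 < J)%N ->
  \sum_(j < J) (if (j0 == j)%N then c else 0) = c.
Proof.
move=> hj; rewrite (bigD1 (Ordinal hj)) //= eqxx big1 ?addr0 //.
move=> j hj'; case: eqP => // e; case/eqP: hj'; apply: val_inj => /=; by rewrite e.
Qed.

Lemma Wm_gram m1 m2 m1' m2' s1 s2 t1 t2 r r' :
  (@Wm m1 m2 s1 s2 *m (@Wm m1' m2' t1 t2)^T) r r' =
  match split r, split r' with
  | inl a, inl a' => if s1 a == t1 a' then (2 ^ K)%:R else 0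
  | inr b, inr b' => if (b %% J == b' %% J)%N && (s2 (b %/ J)%N == t2 (b' %/ J)%N)
                     then (2 ^ K)%:R else 0
  | _, _ => 0
  end.
Proof.
rewrite !mxE big_split_ord /=.
under eq_bigr do rewrite !mxE splitL.
under [X in _ + X]eq_bigr do rewrite !mxE splitR.
case: (split r) => [a|b]; case: (split r') => [a'|b'].
- rewrite [X in _ + X]big1 ?addr0; last by move=> k _; rewrite mulr0.
  exact: w_orth.
- by rewrite !big1 ?addr0 // => k _; rewrite ?mulr0 ?mul0r.
- by rewrite !big1 ?addr0 // => k _; rewrite ?mulr0 ?mul0r.
rewrite big1 ?add0r; last by move=> k _; rewrite mulr0.
have Jp := J_pos b.
rewrite (sum_mulJ (fun k => (if (b %% J == k %% J)%N then w R (s2 (b %/ J)%N) (k %/ J)%N else 0) *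
  (if (b' %% J == k %% J)%N then w R (t2 (b' %/ J)%N) (k %/ J)%N else 0))).
have E : forall (q : 'I_(2^K)) (j : 'I_J), ((q * J + j) %% J = j /\ (q * J + j) %/ J = q)%N.
  by move=> q j; rewrite modnMDl modn_small // divnMDl // divn_small // addn0.
under eq_bigr do under eq_bigr do rewrite !(proj1 (E _ _)) !(proj2 (E _ _)).
rewrite exchange_big /=.
have -> : \sum_(j < J) \sum_(q < 2 ^ K)
   (if (b %% J == j)%N then w R (s2 (b %/ J)%N) q else 0) *
   (if (b' %% J == j)%N then w R (t2 (b' %/ J)%N) q else 0) =
   \sum_(j < J) (if (b %% J == j)%N then
      (if (b' %% J == b %% J)%N then \sum_(q < 2 ^ K) w R (s2 (b %/ J)%N) q * w R (t2 (b' %/ J)%N) q else 0) else 0).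
  apply: eq_bigr => j _; case: eqP => e; last by rewrite big1 // => q _; rewrite mul0r.
  rewrite e; case: eqP => _ //; by rewrite big1 // => q _; rewrite mulr0.
rewrite sum_ind_J ?ltn_mod // w_orth.
rewrite [(b' == b %[mod J])]eq_sym.
by case: (b == b' %[mod J]); case: (_ == _).
Qed.

Lemma Wm_orth m1 m2 m1' m2' s1 s2 t1 t2 :
  (forall a a', s1 a != t1 a') ->
  (forall b b', (b < m2)%N -> (b' < m2')%N -> s2 b != t2 b') ->
  @Wm m1 m2 s1 s2 *m (@Wm m1' m2' t1 t2)^T = 0.
Proof.
move=> h1 h2; apply/matrixP => r r'; rewrite Wm_gram mxE.
case: (split r) => [a|b]; case: (split r') => [a'|b'] //.
  by rewrite (negbTE (h1 a a')).
have Jp := J_pos b.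
rewrite (negbTE (h2 _ _ _ _)) ?andbF // ltn_divLR //.
Qed.

Lemma Wm_self m1 m2 s1 s2 : injective s1 ->
  (forall b b', (b < m2)%N -> (b' < m2)%N -> s2 b = s2 b' -> b = b') ->
  @Wm m1 m2 s1 s2 *m (@Wm m1 m2 s1 s2)^T = ((2 ^ K)%:R)%:M.
Proof.
move=> h1 h2; apply/matrixP => r r'; rewrite Wm_gram !mxE.
rewrite -[r]splitK -[r']splitK.
case: (split r) => [a|b]; case: (split r') => [a'|b'] /=; rewrite ?splitL ?splitR.
- rewrite (inj_eq h1) (inj_eq (@lshift_inj _ _)).
  by case: (a == a').
- have -> : (lshift (m2 * J) a == rshift m1 b') = false.
    by apply/eqP => /(congr1 val) /=; have := ltn_ord a; lia.
  by [].
- have -> : (rshift m1 b == lshift (m2 * J) a') = false.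
    by apply/eqP => /(congr1 val) /=; have := ltn_ord a'; lia.
  by [].
rewrite (inj_eq (@rshift_inj _ _)).
have Jp := J_pos b.
have -> : ((b %% J == b' %% J)%N && (s2 (b %/ J)%N == s2 (b' %/ J)%N)) = (b == b').
  apply/andP/eqP => [[/eqP e1 /eqP e2]|->]; last by split.
  apply: val_inj => /=; rewrite (divn_eq b J) (divn_eq b' J) e1.
  by rewrite (h2 _ _ _ _ e2) // ltn_divLR.
by case: (b == b').
Qed.

End Gram.


Section Alg.
Variable R : realFieldType.

Lemma rv_sq0 n (u : 'rV[R]_n) : u *m u^T = 0 -> u = 0.
Proof.
move=> h; have := congr1 (fun M : 'M[R]_1 => M 0 0) h; rewrite !mxE => hs.
apply/rowP => i; rewrite mxE.
have hnn : forall j, predT j -> 0 <= u 0 j * u^T j 0 by move=> j _; rewrite mxE -expr2 sqr_ge0.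
have := psumr_eq0P hnn hs (i:=i) isT; rewrite mxE => /eqP.
by rewrite mulf_eq0 orbb => /eqP.
Qed.

Lemma gram_unit m n (A : 'M[R]_(m, n)) :
  (forall v : 'cV_n, A *m v = 0 -> v = 0) -> A^T *m A \in unitmx.
Proof.
move=> h; rewrite -row_free_unit; apply: inj_row_free => v hv.
have : (v *m A^T) *m (v *m A^T)^T = 0.
  by rewrite trmx_mul trmxK mulmxA -(mulmxA v) hv mul0mx.
move/rv_sq0 => h2.
have : A *m v^T = 0 by rewrite -[A]trmxK -trmx_mul h2 trmx0.
by move/h => /(congr1 trmx); rewrite trmxK trmx0.
Qed.

Lemma invmx_sym n (G : 'M[R]_n) : G^T = G -> (invmx G)^T = invmx G.
Proof. by move=> hG; rewrite trmx_inv hG. Qed.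

Lemma quad_min (N : nat) (u v : 'cV[R]_N) :
  (forall t : R, \sum_i (u i 0) ^+ 2 <= \sum_i (u i 0 - t * v i 0) ^+ 2) ->
  \sum_i u i 0 * v i 0 = 0.
Proof.
move=> H.
set s := \sum_i u i 0 * v i 0; set n := \sum_i (v i 0) ^+ 2.
have E : forall t, \sum_i (u i 0 - t * v i 0) ^+ 2 = \sum_i (u i 0) ^+ 2 - 2 * t * s + t ^+ 2 * n.
  move=> t.
  rewrite (eq_bigr (fun i => (u i 0) ^+ 2 - 2 * t * (u i 0 * v i 0) + t ^+ 2 * (v i 0) ^+ 2)); last by move=> i _; ring.
  by rewrite big_split /= sumrB -!mulr_sumr.
have n0 : 0 <= n by apply: sumr_ge0 => i _; exact: sqr_ge0.
have n1 : n + 1 != 0 by rewrite lt0r_neq0 // ltr_wpDl.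
pose t := s / (n + 1).
have ht : t * (n + 1) = s by rewrite /t mulfVK.
have := H t; rewrite E => h.
have h' : 0 <= - 2 * t * s + t ^+ 2 * n by lra.
have tt : t * t * (n + 2) <= 0.
  rewrite -ht in h'. nra.
have : t = 0 by nra.
by move=> t0; rewrite -ht t0 mul0r.
Qed.

Variables (N n p r : nat) (chi : 'M[R]_(N, n)) (Rm : 'M[R]_(r, n)) (B : 'M[R]_(n, p)).
Variables (c d : R).
Hypothesis Gu : chi^T *m chi \in unitmx.
Hypothesis RB : Rm *m B = 0.
Hypothesis BB : B^T *m B = c%:M.
Hypothesis RR : Rm *m Rm^T = d%:M.
Hypothesis c0 : c != 0.
Hypothesis d0 : d != 0.
Hypothesis dim : (p + r)%N = n.

Let G := chi^T *m chi.
Let X := chi *m B.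
Let Gi := invmx G.

Lemma GU : G \in unitmx. Proof. exact: Gu. Qed.
Lemma G_sym : G^T = G. Proof. by rewrite /G trmx_mul trmxK. Qed.
Lemma Gi_sym : Gi^T = Gi. Proof. exact: invmx_sym G_sym. Qed.

Lemma chi_inj m (v : 'M_(n, m)) : chi *m v = 0 -> v = 0.
Proof.
move=> h; have : G *m v = 0 by rewrite /G -mulmxA h mulmx0.
by move/(congr1 (mulmx Gi)); rewrite mulmxA mulVmx // mul1mx mulmx0.
Qed.

Lemma XX_unit : X^T *m X \in unitmx.
Proof.
apply: gram_unit => v; rewrite /X -mulmxA => /chi_inj h.
have : (B^T *m B) *m v = 0 by rewrite -mulmxA h mulmx0.
rewrite BB mul_scalar_mx => /eqP; rewrite scaler_eq0 (negbTE c0) /= => /eqP //.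
Qed.

Let S := Rm *m Gi *m Rm^T.

Lemma S_unit : S \in unitmx.
Proof.
have -> : S = (chi *m Gi *m Rm^T)^T *m (chi *m Gi *m Rm^T).
  rewrite !trmx_mul trmxK Gi_sym /S.
  rewrite !mulmxA -(mulmxA _ Gi chi^T) -(mulmxA _ (Gi *m chi^T)) -(mulmxA Gi) -/G.
  by rewrite mulVmx // mulmx1.
apply: gram_unit => v; rewrite -!mulmxA => /chi_inj.
move/(congr1 (mulmx G)); rewrite mulmxA mulmxV // mul1mx mulmx0 => h.
have : (Rm *m Rm^T) *m v = 0 by rewrite -mulmxA h mulmx0.
rewrite RR mul_scalar_mx => /eqP; rewrite scaler_eq0 (negbTE d0) /= => /eqP //.
Qed.

Lemma ker_sub m (Z : 'M[R]_(n, m)) : Rm *m Z = 0 -> exists T, Z = B *m T.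
Proof.
move=> hZ.
have rfR : row_free Rm.
  apply: inj_row_free => v hv.
  have : v *m (Rm *m Rm^T) = 0 by rewrite mulmxA hv mul0mx.
  by rewrite RR mul_mx_scalar => /eqP; rewrite scaler_eq0 (negbTE d0) /= => /eqP.
have rfB : row_free B^T.
  apply: inj_row_free => v hv.
  have : v *m (B^T *m B) = 0 by rewrite mulmxA hv mul0mx.
  by rewrite BB mul_mx_scalar => /eqP; rewrite scaler_eq0 (negbTE c0) /= => /eqP.
have sB : (B^T <= kermx Rm^T)%MS by apply/sub_kermxP; rewrite -trmx_mul RB trmx0.
have rk : \rank (kermx Rm^T) = \rank B^T.
  rewrite mxrank_ker mxrank_tr (eqP rfR) (eqP rfB); lia.
have sK : (kermx Rm^T <= B^T)%MS.
  by rewrite -(mxrank_leqif_sup sB).2 rk.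
have sZ : (Z^T <= B^T)%MS.
  apply: submx_trans sK; apply/sub_kermxP; by rewrite -trmx_mul hZ trmx0.
case/submxP: sZ => D hD; exists D^T.
by rewrite -[Z]trmxK hD trmx_mul trmxK.
Qed.

Let M := Gi *m Rm^T *m invmx S.
Let P := 1%:M - M *m Rm.

Lemma key : P *m Gi *m chi^T = B *m (invmx (X^T *m X) *m X^T).
Proof.
have RP : Rm *m P = 0.
  rewrite /P mulmxBr mulmx1 /M !mulmxA -/S mulmxV ?S_unit // mul1mx subrr //.
have [T hT] : exists T, P *m Gi *m chi^T = B *m T.
  by apply: ker_sub; rewrite !mulmxA RP !mul0mx.
rewrite hT; congr (_ *m _).
have BR : B^T *m Rm^T = 0 by rewrite -trmx_mul RB trmx0.
have BGP : B^T *m G *m P = B^T *m G.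
  rewrite /P mulmxBr mulmx1 /M !mulmxA /Gi -!(mulmxA B^T chi^T chi) -/G (mulmxK GU) BR.
  by rewrite !mul0mx subr0.
have h1 : B^T *m G *m (P *m Gi *m chi^T) = X^T.
  by rewrite 2!mulmxA BGP /Gi (mulmxK GU) /X trmx_mul.
have h2 : (X^T *m X) *m T = X^T.
  by rewrite -[RHS]h1 hT /X /G trmx_mul !mulmxA.
by have := congr1 (mulmx (invmx (X^T *m X))) h2; rewrite mulKmx ?XX_unit.
Qed.

Lemma rls_eq (Y : 'cV[R]_N) (th : 'cV[R]_n) : Rm *m th = 0 ->
  (forall th', Rm *m th' = 0 ->
     \sum_i ((Y - chi *m th) i 0) ^+ 2 <= \sum_i ((Y - chi *m th') i 0) ^+ 2) ->
  th = B *m (invmx (X^T *m X) *m X^T *m Y).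
Proof.
move=> hR hmin.
have [g hg] := ker_sub hR.
set u := Y - X *m g.
set v := X *m (X^T *m u).
have H : forall t : R, \sum_i (u i 0) ^+ 2 <= \sum_i (u i 0 - t * v i 0) ^+ 2.
  move=> t.
  have := hmin (B *m (g + t *: (X^T *m u))).
  rewrite mulmxA RB mul0mx => /(_ erefl).
  rewrite hg.
  have -> : Y - chi *m (B *m (g + t *: (X^T *m u))) = u - t *: v.
    rewrite /u /v /X mulmxA mulmxDr -scalemxAr opprD addrA //.
  rewrite mulmxA -/X -/u.
  have E2 : \sum_i (u - t *: v) i 0 ^+ 2 = \sum_i (u i 0 - t * v i 0) ^+ 2.
    by apply: eq_bigr => i _; rewrite !mxE.
  by rewrite E2.
have := quad_min H.
have -> : \sum_i u i 0 * v i 0 = ((X^T *m u)^T *m (X^T *m u)) 0 0.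
  rewrite trmx_mul trmxK -mulmxA -/v mxE; apply: eq_bigr => i _; by rewrite [u^T 0 i]mxE.
move=> h0.
have hXu : X^T *m u = 0.
  apply: trmx_inj; rewrite trmx0; apply: rv_sq0; rewrite trmxK.
  by apply/matrixP => i j; rewrite !ord1 h0 mxE.
have : X^T *m Y = (X^T *m X) *m g.
  by apply/eqP; rewrite -subr_eq0 -mulmxA -mulmxBr -/u hXu.
move/(congr1 (mulmx (invmx (X^T *m X)))); rewrite mulKmx ?XX_unit // => hg'.
by rewrite hg -hg' [invmx _ *m (X^T *m Y)]mulmxA.
Qed.
End Alg.


Lemma nthS_in K (F : {set {set 'I_K}}) a : (a < #|F|)%N -> nthS F a \in F.
Proof. by move=> h; rewrite /nthS -mem_enum mem_nth // -cardE. Qed.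

Lemma nthS_inj K (F : {set {set 'I_K}}) a a' : (a < #|F|)%N -> (a' < #|F|)%N ->
  nthS F a = nthS F a' -> a = a'.
Proof.
move=> h h' e; apply/eqP; rewrite -(nth_uniq set0 (s := enum F)) ?enum_uniq -?cardE //.
by apply/eqP.
Qed.

Section Inst.
Variables (R : realFieldType) (N J K : nat).
Variables (W : 'I_N -> 'I_(2 ^ K)) (x : 'M[R]_(N, J)) (Y : 'cV[R]_N).
Variables (Fp Fp' : {set {set 'I_K}}).
Hypothesis Fp_sub : set0 \notin Fp.

Definition Sp (a : 'I_(1 + #|Fp|)) : {set 'I_K} :=
  match split a with inl _ => set0 | inr b => nthS Fp b end.

Definition Bm : 'M[R]_(ntheta J K, ncol J Fp Fp') :=
  (@Wm R K J (1 + #|Fp|) #|Fp'| Sp (nthS Fp'))^T.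

Lemma sum_tind i (f : nat -> R) : \sum_(q < 2 ^ K) tind R W i q * f q = f (W i).
Proof.
rewrite (bigD1 (W i)) //= /tind eqxx mul1r big1 ?addr0 // => q hq.
have -> : ((W i : nat) == q) = false.
  by apply/negbTE; apply: contra hq => /eqP e; apply/eqP/val_inj.
by rewrite mul0r.
Qed.

Lemma QJ_E (q j : nat) : (j < J)%N -> ((q * J + j) %% J = j /\ (q * J + j) %/ J = q)%N.
Proof. by move=> hj; rewrite modnMDl modn_small // divnMDl ?divn_small ?addn0 //; lia. Qed.

Lemma chiB : chiL W x *m Bm = Xdes W x Fp Fp'.
Proof.
apply/matrixP => i col; rewrite !mxE big_split_ord /=.
under eq_bigr do rewrite !mxE splitL.
under [X in _ + X]eq_bigr do rewrite !mxE splitR.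
case: (split col) => [a|b].
  rewrite [X in _ + X]big1 ?addr0; last by move=> k _; rewrite mulr0.
  rewrite (sum_tind i (fun q => w R (Sp a) q)) /Sp.
  by case: (split a) => [_|b]; rewrite ?w0.
rewrite big1 ?add0r; last by move=> k _; rewrite mulr0.
have Jp := J_pos b.
rewrite (sum_mulJ J (fun k => tind R W i (k %/ J) * xn x i (k %% J) *
   (if (b %% J == k %% J)%N then w R (nthS Fp' (b %/ J)%N) (k %/ J)%N else 0))).
under eq_bigr => q _ do under eq_bigr => j _ do
  rewrite !(proj1 (QJ_E q (ltn_ord j))) !(proj2 (QJ_E q (ltn_ord j))).
rewrite (eq_bigr (fun q : 'I_(2 ^ K) =>
    tind R W i q * (xn x i (b %% J)%N * w R (nthS Fp' (b %/ J)%N) q))); last first.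
  move=> q _; rewrite -(@sum_ind_J R J (b %% J)%N (tind R W i q * (xn x i (b %% J)%N * w R (nthS Fp' (b %/ J)%N) q)) (ltn_pmod b Jp)).
  apply: eq_bigr => j _; case: eqP => [<-|_]; by rewrite ?mulr0 ?mulrA.
rewrite (sum_tind i (fun q => xn x i (b %% J)%N * w R (nthS Fp' (b %/ J)%N) q)).
by rewrite mulrC.
Qed.

Lemma trmxZ' m n (c : R) (A : 'M[R]_(m, n)) : (c *: A)^T = c *: A^T.
Proof. by apply/matrixP => i j; rewrite !mxE. Qed.

Definition WR := @Wm R K J #|Fm Fp| #|Fm' Fp'| (fun a => nthS (Fm Fp) a) (nthS (Fm' Fp')).
Definition cR : R := 2 / 2 ^+ K.

Lemma RresE : Rres R J Fp Fp' = cR *: WR.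
Proof.
apply/matrixP => r c; rewrite !mxE.
case: (split r) => a; case: (split c) => q; rewrite ?mulr0 //.
all: try reflexivity.
all: by case: ifP; rewrite ?mulr0.
Qed.

Lemma Sp_inj : injective Sp.
Proof.
move=> a a' e; rewrite -[a]splitK -[a']splitK; congr unsplit; move: e; rewrite /Sp.
case: (split a) => [u|b]; case: (split a') => [u'|b'] e.
- by rewrite (ord1 u) (ord1 u').
- by move: Fp_sub; rewrite e nthS_in.
- by move: Fp_sub; rewrite -e nthS_in.
- by congr inr; apply: val_inj; apply: nthS_inj e.
Qed.

Lemma Sp_rshift a : Sp (rshift 1 a) = nthS Fp a.
Proof. by rewrite /Sp splitR. Qed.

Lemma RB : Rres R J Fp Fp' *m Bm = 0.
Proof.
rewrite RresE -scalemxAl /Bm /WR Wm_orth ?scaler0 //.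
  move=> a a'; have := nthS_in (ltn_ord a); rewrite inE => /andP [h1 h2].
  rewrite /Sp; case: (split a') => [_|b]; first by [].
  by apply: contraNneq h2 => ->; rewrite nthS_in.
move=> b b' hb hb'; have := nthS_in hb; rewrite inE.
by apply: contraNneq => ->; rewrite nthS_in.
Qed.

Lemma BB : Bm^T *m Bm = ((2 ^ K)%:R)%:M.
Proof.
rewrite /Bm trmxK Wm_self //; first exact: Sp_inj.
by move=> b b' hb hb' e; apply: nthS_inj e.
Qed.

Lemma RR : Rres R J Fp Fp' *m (Rres R J Fp Fp')^T = (cR * cR * (2 ^ K)%:R)%:M.
Proof.
rewrite RresE trmxZ' -scalemxAl -scalemxAr /WR Wm_self.
- by rewrite !scale_scalar_mx mulrA.
- by move=> a a' e; apply: val_inj; apply: nthS_inj e.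
by move=> b b' hb hb' e; apply: nthS_inj e.
Qed.

Lemma cR0 : cR != 0.
Proof. by rewrite /cR mulf_neq0 ?invr_eq0 ?expf_neq0 ?pnatr_eq0. Qed.

Lemma B0 : ((2 ^ K)%:R : R) != 0.
Proof. have h : (0 < 2 ^ K)%N by rewrite expn_gt0. by rewrite pnatr_eq0 -lt0n. Qed.

Lemma dR0 : cR * cR * (2 ^ K)%:R != 0.
Proof. apply: mulf_neq0; [apply: mulf_neq0; exact: cR0 | exact: B0]. Qed.

Lemma dims : (ncol J Fp Fp' + (#|Fm Fp| + #|Fm' Fp'| * J))%N = ntheta J K.
Proof.
have h1 : (1 + #|Fp| + #|Fm Fp| = 2 ^ K)%N.
  rewrite -(card_sets K) -(cardsC (Fm Fp)).
  have -> : ~: Fm Fp = set0 |: Fp.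
    apply/setP => S; rewrite !inE; case: (S == set0) / eqP => [->|]; first by [].
    by rewrite negbK.
  rewrite cardsU1 Fp_sub /=; lia.
have h2 : (#|Fp'| + #|Fm' Fp'| = 2 ^ K)%N.
  rewrite -(card_sets K) -(cardsC Fp').
  by congr (_ + _)%N; apply: eq_card => S; rewrite !inE.
have h3 : (#|Fp'| * J + #|Fm' Fp'| * J = 2 ^ K * J)%N by rewrite -mulnDl h2.
rewrite /ncol /ntheta /Qd; lia.
Qed.

Definition Esel : 'M[R]_(#|Fp|, ncol J Fp Fp') := \matrix_(a, c) (c == posZ J Fp' a)%:R.

Lemma CB : CSplus R Fp *m usubmx Bm = 2 *: Esel.
Proof.
apply/matrixP => a c; rewrite !mxE.
under eq_bigr do rewrite !mxE splitL.
rewrite -[c]splitK; case: (split c) => [a'|b]; rewrite /= ?splitL ?splitR.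
  rewrite (eq_bigr (fun q : 'I_(2 ^ K) => cR * (w R (nthS Fp a) q * w R (Sp a') q))); last first.
    by move=> q _; rewrite mulrA.
  have -> : (lshift (#|Fp'| * J) a' == posZ J Fp' a) = (a' == rshift 1 a).
    by apply/eqP/eqP => [/(congr1 val) /= e|->]; first apply: val_inj.
  rewrite -mulr_sumr w_orth -(Sp_rshift a) (inj_eq Sp_inj) eq_sym.
  case: (a' == rshift 1 a); last by rewrite !mulr0.
  by rewrite mulr1 natrX mulfVK ?expf_neq0 ?pnatr_eq0.
rewrite big1 ?mulr0 //; last by move=> q _; rewrite mulr0.
have -> : (rshift (1 + #|Fp|) b == posZ J Fp' a) = false.
  apply/eqP => /(congr1 val); rewrite /posZ /= -addnA => /eqP; rewrite eqn_add2l => /eqP e.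
  by move: (ltn_ord a); rewrite -e ltnNge leq_addr.
by rewrite mulr0.
Qed.

End Inst.

Unset Implicit Arguments. Set Strict Implicit. Set Printing Implicit Defensive.

Lemma sum_sel (R : realFieldType) n (i0 : 'I_n) (f : 'I_n -> R) :
  \sum_(c < n) (c == i0)%:R * f c = f i0.
Proof.
rewrite (bigD1 i0) //= eqxx mul1r big1 ?addr0 // => c hc.
by rewrite (negbTE hc) mul0r.
Qed.

Lemma sum_sel' (R : realFieldType) n (i0 : 'I_n) (f : 'I_n -> R) :
  \sum_(c < n) f c * (c == i0)%:R = f i0.
Proof. by rewrite -(sum_sel _ _ i0 f); apply: eq_bigr => c _; rewrite mulrC. Qed.

Lemma Esel_conj (R : realFieldType) J K (Fp Fp' : {set {set 'I_K}}) M a b :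
  (Esel R J Fp Fp' *m M *m (Esel R J Fp Fp')^T) a b = M (posZ J Fp' a) (posZ J Fp' b).
Proof.
rewrite mxE.
rewrite (eq_bigr (fun c => M (posZ J Fp' a) c * (c == posZ J Fp' b)%:R)).
  exact: sum_sel'.
move=> c _; rewrite [(_ *m M) a c]mxE [X in _ * X]mxE [Esel _ _ _ _ _ _]mxE.
congr (_ * _); rewrite (eq_bigr (fun c' => (c' == posZ J Fp' a)%:R * M c' c)) ?sum_sel //.
by move=> c' _; rewrite mxE.
Qed.

Theorem propositionS5 (R : realFieldType) (N J K : nat)
  (W : 'I_N -> 'I_(2 ^ K)) (x : 'M[R]_(N, J)) (Y : 'cV[R]_N)
  (Fp Fp' : {set {set 'I_K}})
  (Fp_sub : set0 \notin Fp) (Fp_nonempty : Fp != set0)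
  (x_centered : forall j : 'I_J, \sum_(i < N) x i j = 0)
  (chiL_nonsing : Gram W x \in unitmx)
  (thr : 'cV[R]_(ntheta J K)) (thr_RLS : is_RLS W x Y Fp Fp' thr) :
  tau_r_plus W x Y Fp Fp' = CSplus R Fp *m Yhat_rS thr /\
  Omega_r_plus W x Y Fp Fp' = CSplus R Fp *m Psi_rS W x Y Fp Fp' thr *m (CSplus R Fp)^T.
Proof.
have hX := chiB W x Fp' Fp_sub.
have hRB := RB R J Fp Fp'.
have hBB := BB R J Fp' Fp_sub.
have hRR := RR R J Fp Fp'.
have hd := dims J Fp' Fp_sub.
have Gu : (chiL W x)^T *m chiL W x \in unitmx := chiL_nonsing.
case: thr_RLS => hR hmin.
have hth : thr = Bm R J Fp Fp' *m beta_ols W x Y Fp Fp'.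
  rewrite (rls_eq Gu hRB hBB hRR (B0 R K) (dR0 R K) hd hR hmin).
  by rewrite hX.
have hres : Y - chiL W x *m thr = res_ols W x Y Fp Fp'.
  by rewrite hth mulmxA hX.
have hCB := CB R J Fp' Fp_sub.
split.
  rewrite /Yhat_rS hth -mul_usub_mx mulmxA hCB.
  apply/colP => a; rewrite [LHS]mxE [RHS]mxE.
  rewrite (eq_bigr (fun c => 2 * ((c == posZ J Fp' a)%:R * beta_ols W x Y Fp Fp' c 0))); last first.
    by move=> c _; rewrite [X in X * _ = _]mxE [Esel _ _ _ _ _ _]mxE mulrA.
  by rewrite -mulr_sumr sum_sel.
have hkey := key Gu hRB hBB hRR (B0 R K) (dR0 R K) hd.
rewrite hX in hkey.
set P := 1%:M - Mr W x Fp Fp' *m Rres R J Fp Fp'.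
set B := Bm R J Fp Fp'.
set X := Xdes W x Fp Fp'.
set chi := chiL W x.
set D := diag_mx (\row_i (res_ols W x Y Fp Fp' i 0) ^+ 2).
have hL : P *m invmx (chi^T *m chi) *m chi^T = B *m (invmx (X^T *m X) *m X^T) := hkey.
have E1 : Psi_rS W x Y Fp Fp' thr = usubmx B *m V_ehw W x Y Fp Fp' *m (usubmx B)^T.
  rewrite /Psi_rS /Sigma_r hres -/D.
  have -> : P *m (invmx (Gram W x) *m (chiL W x)^T *m D *m chiL W x *m invmx (Gram W x)) *m P^T
     = (P *m invmx (chi^T *m chi) *m chi^T) *m D *m (P *m invmx (chi^T *m chi) *m chi^T)^T.
    by rewrite !trmx_mul trmxK Gi_sym !mulmxA.
  rewrite hL !trmx_mul trmxK invmx_sym; last by rewrite trmx_mul trmxK.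
  rewrite /ulsubmx -!mul_usub_mx !mulmxA -mulmx_lsub -trmx_usub /V_ehw ?mulmxA.
  by [].
rewrite /Omega_r_plus E1; move: (V_ehw W x Y Fp Fp') => V.
rewrite !mulmxA hCB -mulmxA -trmx_mul hCB trmxZ' -scalemxAl -scalemxAl scalemxAr scalerA.
rewrite -scalemxAr.
apply/matrixP => a b; rewrite [LHS]mxE [RHS]mxE Esel_conj.
congr (_ * _); lra.
Qed.
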